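(* For every integer $n\ge 2$, the complete graph $K_n$ satisfies $IDI(K_n)=n$.
   Context: For a finite simple connected graph $G=(V,E)$ with diameter $d$, a rank assignment is a function $f:V\to\mathbb{R}$; under $f$, the string of a vertex $v$ is the $d$-vector whose $i$-th coordinate is the sum of $f(w)$ over all vertices $w$ with $d(v,w)=i$. The ID-index $IDI(G)$ is the minimum $k$ such that there exists $f:V\to\mathbb{R}$ with $|f(V)|=k$ under which all vertices have distinct strings. *)

(* Defs.v *)
From mathcomp Require Import all_boot all_order all_algebra.
From mathcomp Require Import Rstruct.
Local Notation R := Rdefinitions.R.
Set Implicit Arguments. Unset Strict Implicit. Unset Printing Implicit Defensive.
Import GRing.Theory Num.Theory.
Local Open Scope ring_scope.

Definition simple_graph (T : finType) (e : rel T) : Prop :=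
  symmetric e /\ irreflexive e.

Fixpoint ball (T : finType) (e : rel T) (x : T) (k : nat) : {set T} :=
  match k with
  | 0 => [set x]
  | k'.+1 => ball e x k' :|: [set y | [exists z in ball e x k', e z y]]
  end.

Definition connected_graph (T : finType) (e : rel T) : Prop :=
  forall x y : T, exists k, y \in ball e x k.

(* graph distance: the least k with y within distance k of x
   (in a connected graph on #|T| vertices, this k is < #|T|). *)
Definition gdist (T : finType) (e : rel T) (x y : T) : nat :=
  find (fun k => y \in ball e x k) (iota 0 #|T|).

Definition diameter (T : finType) (e : rel T) : nat :=
  \max_(x : T) \max_(y : T) gdist e x y.

(* the string of v under the rank assignment f: the d-vector whose
   i-th coordinate (i = 1..d, stored at index i-1) is the sum of f w over
   all w with d(v,w) = i. *)
Definition vstring (T : finType) (e : rel T) (f : T -> R) (v : T)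
  : {ffun 'I_(diameter e) -> R} :=
  [ffun i : 'I_(diameter e) => \sum_(w : T | gdist e v w == i.+1) (f w : R)].

Definition ID_assignment (T : finType) (e : rel T) (f : T -> R) : Prop :=
  injective (vstring e f).

Definition nvalues (T : finType) (f : T -> R) : nat :=
  size (undup [seq f x | x <- enum T]).

Definition is_IDI (T : finType) (e : rel T) (k : nat) : Prop :=
  (exists f : T -> R, ID_assignment e f /\ nvalues f = k) /\
  (forall f : T -> R, ID_assignment e f -> (k <= nvalues f)%N).

Definition K (n : nat) : rel 'I_n := fun i j => i != j.
Arguments K n : clear implicits.

(* Main.v *)
Require Import Defs.
From mathcomp Require Import all_boot all_order all_algebra.
From mathcomp Require Import Rstruct.
Import GRing.Theory Num.Theory.

Lemma ball1_full (m : nat) (v w : 'I_m.+2) : w \in ball (K m.+2) v 1.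
Proof.
rewrite /= !inE; case: (eqVneq w v) => [//|wv] /=.
apply/existsP; exists v; rewrite inE eqxx /= /K eq_sym; exact: wv.
Qed.

Lemma gdistK (m : nat) (v w : 'I_m.+2) : gdist (K m.+2) v w = (w != v).
Proof.
rewrite /gdist card_ord /= inE.
case: (eqVneq w v) => //= _.
by rewrite ball1_full.
Qed.

Lemma diamK (m : nat) : diameter (K m.+2) = 1%N.
Proof.
rewrite /diameter; apply/eqP; rewrite eqn_leq; apply/andP; split.
  apply/bigmax_leqP => x _; apply/bigmax_leqP => y _; rewrite gdistK; by case: (y != x).
apply: (leq_trans _ (leq_bigmax ord0)).
apply: (leq_trans _ (leq_bigmax (@Ordinal m.+2 1 isT))).
by rewrite gdistK.
Qed.

Lemma ord_val0 d (i : 'I_d) : d = 1%N -> val i = 0%N.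
Proof. by case: i => [[|k]] /= Hk Hd; subst d. Qed.

Lemma vstringK (m : nat) (f : 'I_m.+2 -> Rdefinitions.R) v (i : 'I_(diameter (K m.+2))) :
  vstring (K m.+2) f v i = (\sum_(w : 'I_m.+2 | w != v) f w)%R.
Proof.
rewrite /vstring ffunE.
have -> : val i = 0%N.
  exact: ord_val0 (diamK m).
apply: eq_bigl => w; rewrite gdistK; by case: (w != v).
Qed.

Lemma sum_minus (m : nat) (f : 'I_m.+2 -> Rdefinitions.R) v :
  (\sum_(w : 'I_m.+2 | w != v) f w = \sum_w f w - f v)%R.
Proof. by rewrite [in RHS](bigD1 v) //= addrAC subrr add0r. Qed.

Lemma ID_inj (m : nat) (f : 'I_m.+2 -> Rdefinitions.R) :
  ID_assignment (K m.+2) f <-> injective f.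
Proof.
split => H a b E.
  apply: H; apply/ffunP => i; by rewrite !vstringK !sum_minus E.
have i0 : 'I_(diameter (K m.+2)) by rewrite diamK; exact: ord0.
have : vstring (K m.+2) f a i0 = vstring (K m.+2) f b i0 by rewrite E.
rewrite !vstringK !sum_minus => E'.
apply: H; move/addrI: E'; exact: oppr_inj.
Qed.

Lemma nvalues_inj (n : nat) (f : 'I_n -> Rdefinitions.R) :
  injective f -> nvalues f = n.
Proof.
move=> H; rewrite /nvalues undup_id.
  by rewrite size_map size_enum_ord.
by rewrite (map_inj_uniq H) enum_uniq.
Qed.

Theorem mainTheorem11 (n : nat) : 2 <= n -> is_IDI (K n) n.
Proof.
case: n => [|[|m]] // _; split.
  exists (fun i : 'I_m.+2 => ((val i)%:R)%R : Rdefinitions.R); split; last first.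
    by apply: nvalues_inj => a b /eqP; rewrite eqr_nat => /eqP /val_inj.
  by apply/ID_inj => a b /eqP; rewrite eqr_nat => /eqP /val_inj.
by move=> f /ID_inj /nvalues_inj ->.
Qed.
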